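(* Let $n\ge1$, let $\Gamma$ be a set of formulas and $\alpha$ a formula, and suppose there are distinct propositional variables $p_1,\dots,p_n$ not occurring in $\Gamma\cup\{\alpha\}$. If $\Gamma\nvdash_n\alpha$, then $\Gamma\nvDash_n\alpha$.
   Context: Formulas are built from a countably infinite set of propositional variables and $\bot$ using $\land,\lor,\to$; $\neg\alpha:=\alpha\to\bot$; intuitionistic Kripke semantics with valuations assigning upward-closed sets. $\mathfrak{F}_n=\langle\wp^*(n),\supseteq\rangle$, where $n=\{0,\dots,n-1\}$ and $\wp^*(n)$ is the set of non-empty subsets of $n$; its root is $n$. $\Gamma\vDash_n\varphi$ means: for every valuation $V$ on $\mathfrak{F}_n$, if $\mathfrak{F}_n,V,n\vDash\gamma$ for all $\gamma\in\Gamma$ then $\mathfrak{F}_n,V,n\vDash\varphi$. $\mathbf{ML}_n$ is the smallest superintuitionistic logic (containing intuitionistic propositional logic, closed under modus ponens and uniform substitution) that contains all instances of $\boldsymbol{kp}$: $(\neg p\to q\lor r)\to(\neg p\to q)\lor(\neg p\to r)$ and $\boldsymbol{bd}_n$: $p_n\lor(p_n\to(p_{n-1}\lor(p_{n-1}\to(\cdots(p_1\lor(p_1\to\bot))\cdots))))$, and is closed under the rule $\boldsymbol{Ed}_n$: from $\alpha\to(\beta\lor\bigvee_{i=1}^n\neg\lambda_i)$ infer $\alpha\to\beta$, where $p_1,\dots,p_n$ are distinct variables not occurring in $\alpha$ or $\beta$ and $\lambda_i=p_i\land\bigwedge_{j\neq i}\neg p_j$. $\Gamma\vdash_n\varphi$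 means there are finitely many $\gamma_1,\dots,\gamma_k\in\Gamma$ with $\bigwedge_i\gamma_i\to\varphi\in\mathbf{ML}_n$. *)

(* Defs.v *)
From mathcomp Require Import all_boot.
Set Implicit Arguments. Unset Strict Implicit. Unset Printing Implicit Defensive.

Inductive form : Type :=
| Var : nat -> form
| Bot : form
| And : form -> form -> form
| Or  : form -> form -> form
| Imp : form -> form -> form.

Definition Neg (a : form) : form := Imp a Bot.
Definition Top : form := Imp Bot Bot.

Fixpoint vars (f : form) : seq nat :=
  match f with
  | Var p => [:: p]
  | Bot => [::]
  | And a b | Or a b | Imp a b => vars a ++ vars b
  end.

Fixpoint subst (s : nat -> form) (f : form) : form :=
  match f with
  | Var p => s p
  | Bot => Bot
  | And a b => And (subst s a) (subst s b)
  | Or a b => Or (subst s a) (subst s b)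
  | Imp a b => Imp (subst s a) (subst s b)
  end.

Fixpoint bigAnd (l : seq form) : form :=
  match l with [::] => Top | a :: l' => And a (bigAnd l') end.
Fixpoint bigOr (l : seq form) : form :=
  match l with [::] => Bot | a :: l' => Or a (bigOr l') end.

(* Worlds are sets w : {set 'I_n} with w != set0; v is above w iff v ⊆ w. *)
Definition persistent (n : nat) (V : nat -> {set 'I_n} -> Prop) : Prop :=
  forall p (w v : {set 'I_n}), w != set0 -> v != set0 -> v \subset w ->
    V p w -> V p v.

Fixpoint sat (n : nat) (V : nat -> {set 'I_n} -> Prop) (w : {set 'I_n})
  (f : form) : Prop :=
  match f with
  | Var p => V p w
  | Bot => False
  | And a b => sat V w a /\ sat V w b
  | Or a b => sat V w a \/ sat V w b
  | Imp a b => forall v : {set 'I_n}, v != set0 -> v \subset w ->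
                 sat V v a -> sat V v b
  end.

(* Gamma |=_n phi : truth at the root n = [set: 'I_n] is preserved. *)
Definition sem_cons (n : nat) (Gamma : form -> Prop) (phi : form) : Prop :=
  forall V : nat -> {set 'I_n} -> Prop, persistent V ->
    (forall g, Gamma g -> sat V [set: 'I_n] g) -> sat V [set: 'I_n] phi.

Definition kp (p q r : form) : form :=
  Imp (Imp (Neg p) (Or q r)) (Or (Imp (Neg p) q) (Imp (Neg p) r)).

Fixpoint bd (f : nat -> form) (k : nat) : form :=
  match k with
  | 0 => Bot
  | k'.+1 => Or (f k'.+1) (Imp (f k'.+1) (bd f k'))
  end.

Definition lam (ps : seq nat) (x : nat) : form :=
  And (Var x) (bigAnd [seq Neg (Var y) | y <- ps & y != x]).

Inductive ML (n : nat) : form -> Prop :=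
| ax1 a b : ML n (Imp a (Imp b a))
| ax2 a b c : ML n (Imp (Imp a (Imp b c)) (Imp (Imp a b) (Imp a c)))
| ax3 a b : ML n (Imp (And a b) a)
| ax4 a b : ML n (Imp (And a b) b)
| ax5 a b : ML n (Imp a (Imp b (And a b)))
| ax6 a b : ML n (Imp a (Or a b))
| ax7 a b : ML n (Imp b (Or a b))
| ax8 a b c : ML n (Imp (Imp a c) (Imp (Imp b c) (Imp (Or a b) c)))
| ax9 a : ML n (Imp Bot a)
| axkp p q r : ML n (kp p q r)
| axbd f : ML n (bd f n)
| mp a b : ML n (Imp a b) -> ML n a -> ML n b
| usubst s a : ML n a -> ML n (subst s a)
| ed (ps : seq nat) a b : size ps = n -> uniq ps ->
    (forall x, x \in ps -> x \notin vars a /\ x \notin vars b) ->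
    ML n (Imp a (Or b (bigOr [seq Neg (lam ps x) | x <- ps]))) ->
    ML n (Imp a b).

(* list membership (form has no eqType instance here) *)
Fixpoint inl (g : form) (l : seq form) : Prop :=
  match l with [::] => False | a :: l' => a = g \/ inl g l' end.

Definition derives (n : nat) (Gamma : form -> Prop) (phi : form) : Prop :=
  exists gs : seq form, (forall g, inl g gs -> Gamma g) /\ ML n (Imp (bigAnd gs) phi).

(* Main.v *)
Require Import Defs.
From mathcomp Require Import all_boot zify.
From Stdlib Require Import Classical ClassicalEpsilon IndefiniteDescription.
Set Implicit Arguments. Unset Strict Implicit. Unset Printing Implicit Defensive.


Section PFsec.
Variable n : nat.

Inductive PF (ctx : seq form) : form -> Prop :=
| PFax a : ML n a -> PF ctx a
| PFhyp a : inl a ctx -> PF ctx a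
| PFmp a b : PF ctx (Imp a b) -> PF ctx a -> PF ctx b.

Lemma PF_I ctx a : PF ctx (Imp a a).
Proof.
apply: (PFmp (a := Imp a (Imp a a))).
  apply: (PFmp (a := Imp a (Imp (Imp a a) a))); first exact/PFax/ax2.
  exact/PFax/ax1.
exact/PFax/ax1.
Qed.

Lemma PF_ded ctx a b : PF (a :: ctx) b -> PF ctx (Imp a b).
Proof.
elim=> {b} [b Hb|b Hb|c b _ IH1 _ IH2].
- apply: (PFmp (a := b)); [exact/PFax/ax1 | exact/PFax].
- case: Hb => [->|Hb]; first exact: PF_I.
  apply: (PFmp (a := b)); [exact/PFax/ax1 | exact/PFhyp].
- apply: PFmp IH2; apply: PFmp IH1; exact/PFax/ax2.
Qed.

Lemma PF_weak c1 c2 a : (forall g, inl g c1 -> inl g c2) -> PF c1 a -> PF c2 a.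
Proof.
move=> H; elim=> {a} [a Ha|a Ha|a b _ IH1 _ IH2].
- exact: PFax. - exact/PFhyp/H. - exact: PFmp IH1 IH2.
Qed.

Lemma PF_cut c1 c2 a : (forall g, inl g c1 -> PF c2 g) -> PF c1 a -> PF c2 a.
Proof.
move=> H; elim=> {a} [a Ha|a Ha|a b _ IH1 _ IH2].
- exact: PFax. - exact: H. - exact: PFmp IH1 IH2.
Qed.

Lemma PF_nil a : PF [::] a -> ML n a.
Proof. elim=> {a} [a Ha|a []|a b _ IH1 _ IH2]; [exact: Ha | exact: mp IH1 IH2]. Qed.

Lemma inl_cons g a l : inl g (a :: l) <-> a = g \/ inl g l.
Proof. by []. Qed.

Lemma PF_hyp0 a ctx : PF (a :: ctx) a.
Proof. by apply: PFhyp; left. Qed.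

Lemma PF_mp1 ctx a b : ML n (Imp a b) -> PF ctx a -> PF ctx b.
Proof. move=> H; exact: PFmp (PFax _ H). Qed.

Lemma PF_thm ctx a : PF [::] a -> PF ctx a.
Proof. apply: PF_weak => g []. Qed.

Lemma PF_imp ctx a b : PF [:: a] b -> PF ctx (Imp a b).
Proof. move=> H; apply: PF_thm; exact: PF_ded. Qed.

Lemma PF_app ctx a b : PF [::] (Imp a b) -> PF ctx a -> PF ctx b.
Proof. move=> H; apply: PFmp; exact: PF_thm. Qed.

Lemma PF_andI ctx a b : PF ctx a -> PF ctx b -> PF ctx (And a b).
Proof. move=> Ha Hb; apply: PFmp Hb; apply: PFmp Ha; exact/PFax/ax5. Qed.
Lemma PF_andL ctx a b : PF ctx (And a b) -> PF ctx a.
Proof. apply: PFmp; exact/PFax/ax3. Qed.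
Lemma PF_andR ctx a b : PF ctx (And a b) -> PF ctx b.
Proof. apply: PFmp; exact/PFax/ax4. Qed.
Lemma PF_orL ctx a b : PF ctx a -> PF ctx (Or a b).
Proof. apply: PFmp; exact/PFax/ax6. Qed.
Lemma PF_orR ctx a b : PF ctx b -> PF ctx (Or a b).
Proof. apply: PFmp; exact/PFax/ax7. Qed.
Lemma PF_orE ctx a b c : PF ctx (Imp a c) -> PF ctx (Imp b c) -> PF ctx (Or a b) -> PF ctx c.
Proof. move=> H1 H2; apply: PFmp; apply: PFmp H2; apply: PFmp H1; exact/PFax/ax8. Qed.
Lemma PF_bot ctx a : PF ctx Bot -> PF ctx a.
Proof. apply: PFmp; exact/PFax/ax9. Qed.
Lemma PF_top ctx : PF ctx Top.
Proof. exact: PF_I. Qed.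

Lemma PF_bigAnd gs : PF gs (bigAnd gs).
Proof.
elim: gs => [|g gs IH] /=; first exact: PF_top.
apply: PF_andI; first exact: PF_hyp0.
apply: PF_weak IH => x Hx; by right.
Qed.

Lemma PF_bigAnd_mem gs g : inl g gs -> PF [:: bigAnd gs] g.
Proof.
elim: gs => [|a gs IH] //= [->|H]; first exact/PF_andL/PF_hyp0.
apply: PF_cut (IH H) => x [<-|[]]; exact/PF_andR/PF_hyp0.
Qed.

Lemma PF_toML gs a : PF gs a -> ML n (Imp (bigAnd gs) a).
Proof.
move=> H; apply: PF_nil; apply: PF_ded; apply: PF_cut H => g Hg.
exact: PF_bigAnd_mem.
Qed.

Lemma ML_toPF gs a : ML n (Imp (bigAnd gs) a) -> PF gs a.
Proof. move=> H; exact: PFmp (PFax _ H) (PF_bigAnd gs). Qed.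

Lemma PF_bigOr_mem ts t : inl t ts -> PF [:: t] (bigOr ts).
Proof.
elim: ts => [|a ts IH] //= [->|H]; first exact/PF_orL/PF_hyp0.
exact/PF_orR/IH.
Qed.

Lemma PF_bigOr_sub ts ts' : (forall t, inl t ts -> inl t ts') ->
  PF [:: bigOr ts] (bigOr ts').
Proof.
elim: ts => [|a ts IH] H /=; first exact/PF_bot/PF_hyp0.
apply: PF_orE (PF_hyp0 _ _).
- apply: PF_imp; apply: PF_bigOr_mem; apply: H; by left.
- apply: PF_imp; apply: IH => t Ht; apply: H; by right.
Qed.

Lemma inl_cat g l1 l2 : inl g (l1 ++ l2) <-> inl g l1 \/ inl g l2.
Proof.
elim: l1 => [|a l1 IH] /=; first by split; [right|case].
rewrite IH; tauto.
Qed.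

End PFsec.

Section DerSec.
Variable n : nat.

Definition Der (H : form -> Prop) (a : form) :=
  exists gs, (forall g, inl g gs -> H g) /\ PF n gs a.

Lemma Der_list (H : form -> Prop) gs : (forall g, inl g gs -> Der H g) ->
  exists ks, (forall g, inl g ks -> H g) /\ forall g, inl g gs -> PF n ks g.
Proof.
elim: gs => [|a gs IH] H1; first by exists [::]; split=> g [].
have [ks [Hks Hks']] := IH (fun g Hg => H1 g (or_intror Hg)).
have [ls [Hls Hls']] := H1 a (or_introl erefl).
exists (ls ++ ks); split.
  by move=> g /inl_cat [] ?; [apply: Hls | apply: Hks].
move=> g [<-|Hg].
  by apply: PF_weak Hls' => x Hx; apply/inl_cat; left.
by apply: PF_weak (Hks' _ Hg) => x Hx; apply/inl_cat; right.
Qed.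

Lemma Der_PF H gs a : (forall g, inl g gs -> Der H g) -> PF n gs a -> Der H a.
Proof.
move=> /Der_list [ks [Hks Hks']] Ha; exists ks; split=> //.
exact: PF_cut Ha.
Qed.

Lemma Der_hyp (H : form -> Prop) a : H a -> Der H a.
Proof. by move=> Ha; exists [:: a]; split; [move=> g [<-|[]]|apply: PF_hyp0]. Qed.

Lemma Der_mono (H H' : form -> Prop) a : (forall g, H g -> H' g) -> Der H a -> Der H' a.
Proof. by move=> HH [gs [H1 H2]]; exists gs; split=> // g /H1 /HH. Qed.

Lemma Der_PF1 H a b : PF n [:: a] b -> Der H a -> Der H b.
Proof. by move=> H1 H2; apply: Der_PF H1 => g [<-|[]]. Qed.

Lemma Der_PF2 H a b c : PF n [:: a; b] c -> Der H a -> Der H b -> Der H c.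
Proof. by move=> H1 H2 H3; apply: Der_PF H1 => g [<-|[<-|[]]]. Qed.

Lemma Der_mp H a b : Der H (Imp a b) -> Der H a -> Der H b.
Proof.
apply: Der_PF2; apply: PFmp; [exact: PF_hyp0 | by apply: PFhyp; right; left].
Qed.

Lemma Der_ax H a : ML n a -> Der H a.
Proof. by move=> Ha; exists [::]; split=> //; apply: PFax. Qed.

Lemma Der_split (X Y : form -> Prop) a : Der (fun g => X g \/ Y g) a ->
  exists ys, (forall g, inl g ys -> Y g) /\ Der X (Imp (bigAnd ys) a).
Proof.
move=> [gs [Hgs Ha]].
have : exists xs ys, (forall g, inl g xs -> X g) /\ (forall g, inl g ys -> Y g) /\
   forall g, inl g gs -> inl g xs \/ inl g ys.
  elim: gs Hgs {Ha} => [|g gs IH] Hgs.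
    by exists [::], [::]; split=> // ; split=> //.
  have [xs [ys [H1 [H2 H3]]]] := IH (fun x Hx => Hgs x (or_intror Hx)).
  case: (Hgs g (or_introl erefl)) => Hg.
  - exists (g :: xs), ys; split; first by move=> x [<-|/H1].
    split=> // x [<-|/H3 []]; [by left;left|by left;right|by right].
  - exists xs, (g :: ys); split=> //; split; first by move=> x [<-|/H2].
    move=> x [<-|/H3 []]; [by right;left|by left|by right;right].
move=> [xs [ys [H1 [H2 H3]]]]; exists ys; split=> //; exists xs; split=> //.
apply: PF_ded; apply: PF_cut Ha => g /H3 [Hg|Hg].
  by apply: PFhyp; right.
apply: PF_cut (PF_bigAnd_mem n Hg) => x [<-|[]]; exact: PF_hyp0.
Qed.

Lemma Der_ded (X : form -> Prop) a b : Der (fun g => X g \/ g = a) b -> Der X (Imp a b).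
Proof.
move=> /Der_split [ys [Hys Hb]]; apply: Der_PF1 Hb.
apply: PF_ded; apply: (PFmp (a := bigAnd ys)); first by apply: PFhyp; right; left.
have : PF n [:: a] (bigAnd ys); last by apply: PF_weak => g [<-|[]]; left.
elim: ys Hys => [|y ys IH] Hys /=; first exact: PF_top.
apply: PF_andI; first by rewrite (Hys y (or_introl erefl)); apply: PF_hyp0.
by apply: IH => g Hg; apply: Hys; right.
Qed.

Definition primeT (T : form -> Prop) :=
  [/\ forall a, Der T a -> T a, ~ T Bot & forall a b, T (Or a b) -> T a \/ T b].

Lemma primeT_PF T gs a : primeT T -> (forall g, inl g gs -> T g) -> PF n gs a -> T a.
Proof. by case=> Hc _ _ H1 H2; apply: Hc; exists gs. Qed.

Lemma primeT_PF1 T a b : primeT T -> PF n [:: a] b -> T a -> T b.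
Proof. by move=> HT H1 H2; apply: primeT_PF H1 => // g [<-|[]]. Qed.

Lemma primeT_PF2 T a b c : primeT T -> PF n [:: a; b] c -> T a -> T b -> T c.
Proof. by move=> HT H1 H2 H3; apply: primeT_PF H1 => // g [<-|[<-|[]]]. Qed.

Lemma primeT_mp T a b : primeT T -> T (Imp a b) -> T a -> T b.
Proof.
move=> HT; apply: primeT_PF2 => //.
apply: PFmp; [exact: PF_hyp0 | by apply: PFhyp; right; left].
Qed.

Lemma primeT_ax T a : primeT T -> ML n a -> T a.
Proof. by move=> HT Ha; apply: (primeT_PF (gs := [::])) => //; apply: PFax. Qed.

End DerSec.

Fixpoint to_tree (f : form) : GenTree.tree nat :=
  match f with
  | Var p => GenTree.Leaf p
  | Bot => GenTree.Node 0 [::]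
  | And a b => GenTree.Node 1 [:: to_tree a; to_tree b]
  | Or a b => GenTree.Node 2 [:: to_tree a; to_tree b]
  | Imp a b => GenTree.Node 3 [:: to_tree a; to_tree b]
  end.

Fixpoint of_tree (t : GenTree.tree nat) : form :=
  match t with
  | GenTree.Leaf p => Var p
  | GenTree.Node 1 [:: a; b] => And (of_tree a) (of_tree b)
  | GenTree.Node 2 [:: a; b] => Or (of_tree a) (of_tree b)
  | GenTree.Node 3 [:: a; b] => Imp (of_tree a) (of_tree b)
  | _ => Bot
  end.

Lemma to_treeK f : of_tree (to_tree f) = f.
Proof. by elim: f => //= [a -> b ->|a -> b ->|a -> b ->]. Qed.

Definition enumf (k : nat) : form :=
  if unpickle k is Some t then of_tree t else Bot.

Lemma enumf_surj f : exists k, enumf k = f.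
Proof. by exists (pickle (to_tree f)); rewrite /enumf pickleK to_treeK. Qed.

Definition ext (X : form -> Prop) a := fun g => X g \/ g = a.

Section Lind.
Variable n : nat.
Variables Delta Theta : form -> Prop.

Definition Cons (X : form -> Prop) :=
  forall ts, (forall t, inl t ts -> Theta t) -> ~ Der n X (bigOr ts).

Fixpoint D k : form -> Prop :=
  match k with
  | 0 => Delta
  | k'.+1 => if excluded_middle_informative (Cons (ext (D k') (enumf k')))
             then ext (D k') (enumf k') else D k'
  end.

Lemma D_sub k g : D k g -> D k.+1 g.
Proof. move=> H /=; destruct (excluded_middle_informative _) => //; by left. Qed.

Lemma D_mono i j g : i <= j -> D i g -> D j g.
Proof.
elim: j => [|j IH]; first by rewrite leqn0 => /eqP ->.
rewrite leq_eqVlt => /orP [/eqP -> //|Hij] Hg.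
exact/D_sub/IH.
Qed.

Lemma Cons_D : Cons Delta -> forall k, Cons (D k).
Proof. by move=> H0; elim=> //= k IH; destruct (excluded_middle_informative _). Qed.

Definition TT g := exists k, D k g.

Lemma Der_TT a : Der n TT a -> exists k, Der n (D k) a.
Proof.
move=> [gs [Hgs Ha]].
suff [k Hk] : exists k, forall g, inl g gs -> D k g by exists k, gs.
elim: gs Hgs {Ha} => [|g gs IH] Hgs; first by exists 0.
have [k1 Hk1] := IH (fun x Hx => Hgs x (or_intror Hx)).
have [k2 Hk2] := Hgs g (or_introl erefl).
exists (maxn k1 k2) => x [<-|Hx].
  by apply: D_mono Hk2; rewrite leq_maxr.
by apply: D_mono (Hk1 _ Hx); rewrite leq_maxl.
Qed.

Lemma Cons_TT : Cons Delta -> Cons TT.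
Proof. by move=> H0 ts Hts /Der_TT [k Hk]; exact: (Cons_D H0 Hts Hk). Qed.

Lemma notin_TT k : ~ TT (enumf k) ->
  exists ts, (forall t, inl t ts -> Theta t) /\ Der n (D k) (Imp (enumf k) (bigOr ts)).
Proof.
move=> HT.
case: (excluded_middle_informative (Cons (ext (D k) (enumf k)))) => Hc.
  by exfalso; apply: HT; exists k.+1; rewrite /= ; destruct (excluded_middle_informative _) => //; right.
rewrite /Cons in Hc; have [ts Hts'] := not_all_ex_not _ _ Hc.
have [Hts /NNPP Hd] := imply_to_and _ _ Hts'.
by exists ts; split=> //; apply: Der_ded.
Qed.

Lemma notin_TT' a : ~ TT a ->
  exists ts, (forall t, inl t ts -> Theta t) /\ Der n TT (Imp a (bigOr ts)).
Proof.
have [k <-] := enumf_surj a.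
move=> /notin_TT [ts [H1 H2]]; exists ts; split=> //.
by apply: Der_mono H2 => g Hg; exists k.
Qed.

Lemma lindenbaum : Cons Delta ->
  exists T, [/\ primeT n T, forall a, Delta a -> T a & forall t, Theta t -> ~ T t].
Proof.
move=> H0; have HC := Cons_TT H0.
have Hcl : forall a, Der n TT a -> TT a.
  move=> a Ha; apply: NNPP => /notin_TT' [ts [H1 H2]].
  by apply: (HC ts H1); apply: Der_mp H2 Ha.
exists TT; split.
- split=> //.
  + move=> HB; apply: (HC [::]) => //; exact: Der_hyp.
  + move=> a b Hab; apply: NNPP => /not_or_and [/notin_TT' [ts1 [H1 H1']] /notin_TT' [ts2 [H2 H2']]].
    apply: (HC (ts1 ++ ts2)); first by move=> t /inl_cat [] ?; [apply: H1|apply: H2].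
    apply: (Der_PF (gs := [:: Imp a (bigOr ts1); Imp b (bigOr ts2); Or a b])).
      by move=> g [<-|[<-|[<-|[]]]] //; apply: Der_hyp.
    apply: (PF_orE (a:=a) (b:=b)); last by apply: PFhyp; right; right; left.
    * apply: PF_ded; apply: (PF_cut (c1 := [:: bigOr ts1])).
        move=> g [<-|[]]; apply: PFmp (PF_hyp0 _ _ _); by apply: PFhyp; right; left.
      by apply: PF_bigOr_sub => t Ht; apply/inl_cat; left.
    * apply: PF_ded; apply: (PF_cut (c1 := [:: bigOr ts2])).
        move=> g [<-|[]]; apply: PFmp (PF_hyp0 _ _ _); by apply: PFhyp; right; right; left.
      by apply: PF_bigOr_sub => t Ht; apply/inl_cat; right.
- by move=> a Ha; exists 0.
- move=> t Ht HT; apply: (HC [:: t]); first by move=> x [<-|[]].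
  by apply: (Der_PF1 _ (Der_hyp n HT)); apply: PF_orL; apply: PF_hyp0.
Qed.

End Lind.

Section Canon.
Variable n : nat.

Lemma PF_bigOr_same ts b : (forall t, inl t ts -> t = b) -> PF n [:: bigOr ts] b.
Proof.
elim: ts => [|t ts IH] H /=; first exact/PF_bot/PF_hyp0.
apply: (PF_orE (a := t) (b := bigOr ts)); last exact: PF_hyp0.
- by rewrite (H t (or_introl erefl)); apply: PF_I.
- by apply: PF_imp; apply: IH => x Hx; apply: H; right.
Qed.

Lemma lind1 (Delta : form -> Prop) b : ~ Der n Delta b ->
  exists T, [/\ primeT n T, forall a, Delta a -> T a & ~ T b].
Proof.
move=> Hb.
have [|T [H1 H2 H3]] := @lindenbaum n Delta (fun t => t = b).
  move=> ts Hts Hd; apply: Hb; apply: Der_PF1 Hd; exact: PF_bigOr_same.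
by exists T; split=> //; apply: H3.
Qed.

Lemma ext_imp x a b : primeT n x -> ~ x (Imp a b) ->
  exists y, [/\ primeT n y, forall g, x g -> y g, y a & ~ y b].
Proof.
move=> Hx Hab.
have [|T [H1 H2 H3]] := @lind1 (ext x a) b.
  move=> /Der_ded Hd; apply: Hab; by case: Hx => Hc _ _; apply: Hc.
exists T; split=> //; first by move=> g Hg; apply: H2; left.
by apply: H2; right.
Qed.

Definition Ch (x : form -> Prop) k :=
  exists c : nat -> form -> Prop, [/\ c 0 = x, forall i, i < k -> primeT n (c i) &
    forall i, i.+1 < k -> (forall g, c i g -> c i.+1 g) /\ exists g, c i.+1 g /\ ~ c i g].

Lemma bd_nochain x : ~ Ch x n.+1.
Proof.
move=> [c [Hc0 Hp Hs]].
have [q Hq] : exists q : nat -> form, forall k, 0 < k <= n ->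
    c (n - k).+1 (q k) /\ ~ c (n - k) (q k).
  apply: (functional_choice (fun k g => 0 < k <= n -> c (n - k).+1 g /\ ~ c (n - k) g)).
  move=> k; case: (boolP (0 < k <= n)) => Hk; last by exists Bot.
  have [_ [g Hg]] := Hs (n - k) ltac:(lia).
  by exists g.
have Hk : forall k, k <= n -> ~ c (n - k) (bd q k).
  elim=> [|k IH] Hk /=.
    by rewrite subn0; case: (Hp n (ltnSn n)).
  case: (Hp (n - k.+1) ltac:(lia)) => _ _ Hpr /Hpr [].
  - by have := Hq k.+1 ltac:(lia); case.
  - move=> Himp; apply: (IH ltac:(lia)).
    have -> : n - k = (n - k.+1).+1 by lia.
    have [Hsub _] := Hs (n - k.+1) ltac:(lia).
    apply: (primeT_mp (a := q k.+1) (Hp (n - k.+1).+1 ltac:(lia))); first exact: Hsub.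
    by have [] := Hq k.+1 ltac:(lia).
apply: (Hk n (leqnn n)); rewrite subnn Hc0.
apply: primeT_ax; last exact: axbd.
by rewrite -Hc0; apply: Hp.
Qed.

End Canon.

Section KP.
Variable n : nat.

Lemma PF_negor c d : PF n [:: Neg c; Neg d] (Neg (Or c d)).
Proof.
apply: PF_ded; apply: (PF_orE (a := c) (b := d)); last exact: PF_hyp0.
- by apply: PFhyp; right; left.
- by apply: PFhyp; right; right; left.
Qed.

Lemma PF_negorL c d : PF n [:: Neg (Or c d)] (Neg c).
Proof.
apply: PF_ded; apply: (PFmp (a := Or c d)); first by apply: PFhyp; right; left.
exact/PF_orL/PF_hyp0.
Qed.

Lemma PF_negorR c d : PF n [:: Neg (Or c d)] (Neg d).
Proof.
apply: PF_ded; apply: (PFmp (a := Or c d)); first by apply: PFhyp; right; left.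
exact/PF_orR/PF_hyp0.
Qed.

Lemma prime_bigOr_notin T ts : primeT n T -> (forall t, inl t ts -> ~ T t) -> ~ T (bigOr ts).
Proof.
move=> HT; elim: ts => [|t ts IH] H /=; first by case: HT.
case: HT => _ _ Hp /Hp [].
  by apply: H; left.
by apply: IH => g Hg; apply: H; right.
Qed.

Lemma primeT_top T : primeT n T -> T Top.
Proof. by move=> HT; apply: (primeT_PF (gs := [::]) HT) => //; apply: PF_top. Qed.

Lemma negs_comb (y z : form -> Prop) ys : primeT n y -> primeT n z ->
  (forall g, inl g ys -> exists c, [/\ g = Neg c, y (Neg c) & z (Neg c)]) ->
  exists chi, [/\ y (Neg chi), z (Neg chi) & PF n [:: Neg chi] (bigAnd ys)].
Proof.
move=> Hy Hz; elim: ys => [|g ys IH] H /=.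
  exists Bot; split; [exact: primeT_top|exact: primeT_top|exact: PF_top].
have [chi [H1 H2 H3]] := IH (fun x Hx => H x (or_intror Hx)).
have [c [-> Hc1 Hc2]] := H g (or_introl erefl).
exists (Or c chi); split.
- exact: primeT_PF2 (PF_negor c chi) Hc1 H1.
- exact: primeT_PF2 (PF_negor c chi) Hc2 H2.
- apply: PF_andI; first exact: PF_negorL.
  apply: PF_cut H3 => x [<-|[]]; exact: PF_negorR.
Qed.

Definition sub (A B : form -> Prop) := forall g, A g -> B g.

Lemma kp_canon x y z : primeT n x -> primeT n y -> primeT n z -> sub x y -> sub x z ->
  exists u, [/\ primeT n u, sub x u, sub u y, sub u z &
    forall w, primeT n w -> sub u w -> exists v, [/\ primeT n v, sub w v & sub y v \/ sub z v]].
Proof.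
move=> Hx Hy Hz Hxy Hxz.
pose Delta := fun g => x g \/ exists c, [/\ g = Neg c, y (Neg c) & z (Neg c)].
have [|u [Hu HDu HTu]] := @lindenbaum n Delta (fun t => ~ y t \/ ~ z t).
  move=> ts Hts Hd.
  have [as_ [bs [Has Hbs Hsplit]]] : exists as_ bs, [/\ forall t, inl t as_ -> ~ y t,
      forall t, inl t bs -> ~ z t & forall t, inl t ts -> inl t as_ \/ inl t bs].
    elim: ts Hts {Hd} => [|t ts IH] Hts; first by exists [::], [::].
    have [as_ [bs [H1 H2 H3]]] := IH (fun g Hg => Hts g (or_intror Hg)).
    case: (Hts t (or_introl erefl)) => Ht.
    - exists (t :: as_), bs; split=> //; first by move=> g [<-|/H1].
      by move=> g [<-|/H3 []]; [left;left|left;right|right].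
    - exists as_, (t :: bs); split=> //; first by move=> g [<-|/H2].
      by move=> g [<-|/H3 []]; [right;left|left|right;right].
  have HAB : Der n Delta (Or (bigOr as_) (bigOr bs)).
    apply: (Der_PF1 _ Hd); apply: (PF_orE (a := bigOr ts) (b := Bot)).
    + apply: PF_thm; apply: PF_ded; apply: (PF_cut (c1 := [:: bigOr ts])).
        by move=> g [<-|[]]; apply: PF_hyp0.
      elim: ts {Hts Hd} Hsplit => [|t ts IH] Hsplit /=.
        exact/PF_bot/PF_hyp0.
      apply: (PF_orE (a := t) (b := bigOr ts)); last exact: PF_hyp0.
      * apply: PF_imp; case: (Hsplit t (or_introl erefl)) => Ht.
          exact/PF_orL/PF_bigOr_mem.
        exact/PF_orR/PF_bigOr_mem.
      * by apply: PF_imp; apply: IH => g Hg; apply: Hsplit; right.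
    + by apply: PF_imp; apply: PF_bot; apply: PF_hyp0.
    + exact/PF_orL/PF_hyp0.
  have [ys [Hys Hd2]] := Der_split HAB.
  have [chi [Hc1 Hc2 Hc3]] := negs_comb Hy Hz Hys.
  have Hxk : x (Imp (Neg chi) (Or (bigOr as_) (bigOr bs))).
    case: Hx => Hc _ _; apply: Hc; apply: (Der_PF1 _ Hd2).
    apply: PF_ded; apply: (PFmp (a := bigAnd ys)); first by apply: PFhyp; right; left.
    by apply: PF_cut Hc3 => g [<-|[]]; apply: PF_hyp0.
  have := primeT_mp Hx (primeT_ax Hx (axkp n chi (bigOr as_) (bigOr bs))) Hxk.
  case: (Hx) => _ _ Hp /Hp [] H.
  - by apply: (prime_bigOr_notin Hy Has); apply: primeT_mp Hy (Hxy _ H) Hc1.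
  - by apply: (prime_bigOr_notin Hz Hbs); apply: primeT_mp Hz (Hxz _ H) Hc2.
exists u; split=> //.
- by move=> g Hg; apply: HDu; left.
- by move=> g Hg; apply: NNPP => Hn; apply: (HTu g (or_introl Hn) Hg).
- by move=> g Hg; apply: NNPP => Hn; apply: (HTu g (or_intror Hn) Hg).
move=> w Hw Huw; apply: NNPP => Hno.
have Hwy : Der n (fun g => w g \/ y g) Bot.
  apply: NNPP => Hc; have [v [Hv Hsub Hb]] := lind1 Hc; apply: Hno; exists v; split=> //.
    by move=> g Hg; apply: Hsub; left.
  by left; move=> g Hg; apply: Hsub; right.
have Hwz : Der n (fun g => w g \/ z g) Bot.
  apply: NNPP => Hc; have [v [Hv Hsub Hb]] := lind1 Hc; apply: Hno; exists v; split=> //.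
    by move=> g Hg; apply: Hsub; left.
  by right; move=> g Hg; apply: Hsub; right.
have [ys [Hys Hda]] := Der_split Hwy.
have [zs [Hzs Hdb]] := Der_split Hwz.
have Ha : y (bigAnd ys) := primeT_PF Hy Hys (PF_bigAnd n ys).
have Hb : z (bigAnd zs) := primeT_PF Hz Hzs (PF_bigAnd n zs).
have Hnn : u (Neg (Neg (Or (bigAnd ys) (bigAnd zs)))).
  apply: HDu; right; exists (Neg (Or (bigAnd ys) (bigAnd zs))); split=> //.
  - apply: primeT_PF1 Hy _ Ha; apply: PF_ded.
    apply: (PFmp (a := Or (bigAnd ys) (bigAnd zs))); first exact: PF_hyp0.
    by apply: PF_orL; apply: PFhyp; right; left.
  - apply: primeT_PF1 Hz _ Hb; apply: PF_ded.
    apply: (PFmp (a := Or (bigAnd ys) (bigAnd zs))); first exact: PF_hyp0.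
    by apply: PF_orR; apply: PFhyp; right; left.
case: (Hw) => Hc Hbot _; apply: Hbot; apply: Hc.
apply: (Der_PF (gs := [:: Neg (bigAnd ys); Neg (bigAnd zs);
   Neg (Neg (Or (bigAnd ys) (bigAnd zs)))])).
  move=> g [<-|[<-|[<-|[]]]] //; apply: Der_hyp; exact: Huw.
apply: (PFmp (a := Neg (Or (bigAnd ys) (bigAnd zs)))).
  by apply: PFhyp; right; right; left.
apply: (@PF_cut n [:: Neg (bigAnd ys); Neg (bigAnd zs)]); last exact: PF_negor.
by move=> g [<-|[<-|[]]]; apply: PFhyp; [left|right;left].
Qed.

End KP.

Definition asb (P : Prop) : bool := if excluded_middle_informative P then true else false.
Lemma asbP P : asb P <-> P.
Proof. by rewrite /asb; case: excluded_middle_informative. Qed.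

Lemma inl_filter_map (l : seq nat) (P : pred nat) (f : nat -> form) y :
  y \in l -> P y -> inl (f y) [seq f x | x <- l & P x].
Proof.
elim: l => [|a l IH] //; rewrite inE => /orP [/eqP <-|Hy] Py /=.
  by rewrite Py; left.
by case: (P a) => //=; [right|]; apply: IH.
Qed.

Lemma not_ltn_max n (i : 'I_n.+1) : ~~ (i < n) -> i = ord_max.
Proof. by move=> Hi; apply: val_inj => /=; have := ltn_ord i; lia. Qed.

Section Supp.
Variable n : nat.
Variable ps : seq nat.
Hypothesis Hsize : size ps = n.
Hypothesis Huniq : uniq ps.

Definition lamn (i : nat) := lam ps (nth 0 ps i).

Lemma lam_excl z i j : primeT n z -> z (lamn i) -> z (lamn j) -> i < n -> j < n -> i = j.
Proof.
move=> Hz Hi Hj Hin Hjn; apply/eqP; apply: contraT => Hij; case: (Hz) => _ Hbot _.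
exfalso; apply: Hbot.
have H1 : z (Var (nth 0 ps j)) by apply: primeT_PF1 Hz _ Hj; apply/PF_andL/PF_hyp0.
have H2 : z (bigAnd [seq Neg (Var y) | y <- ps & y != nth 0 ps i]).
  by apply: primeT_PF1 Hz _ Hi; apply/PF_andR/PF_hyp0.
have H3 : z (Neg (Var (nth 0 ps j))).
  apply: primeT_PF1 Hz _ H2; apply: PF_bigAnd_mem.
  apply: (inl_filter_map (fun y => Neg (Var y))); first by rewrite mem_nth // Hsize.
  by rewrite nth_uniq // ?Hsize // eq_sym.
exact: primeT_mp Hz H3 H1.
Qed.

Definition named (x : form -> Prop) (i : nat) : Prop :=
  if i < n then exists y, [/\ primeT n y, sub x y & y (lamn i)]
  else exists y, [/\ primeT n y, sub x y &
     forall z, primeT n z -> sub y z -> forall j, j < n -> ~ z (lamn j)].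

Definition s (x : form -> Prop) : {set 'I_n.+1} := [set i : 'I_n.+1 | asb (named x i)].

Lemma in_s x (i : 'I_n.+1) : i \in s x <-> named x i.
Proof. by rewrite inE asbP. Qed.

Lemma sub_trans (a b c : form -> Prop) : sub a b -> sub b c -> sub a c.
Proof. by move=> H1 H2 g /H1 /H2. Qed.

Lemma s_anti x x' : sub x x' -> s x' \subset s x.
Proof.
move=> Hx; apply/subsetP => i /in_s; rewrite /named => H; apply/in_s; rewrite /named.
by case: (i < n) H => -[y [H1 H2 H3]]; exists y; split=> //; apply: sub_trans H2.
Qed.

Lemma s_eq x x' : sub x x' -> sub x' x -> s x = s x'.
Proof. by move=> H1 H2; apply/eqP; rewrite eqEsubset !s_anti. Qed.


Lemma s_nonempty x : primeT n x -> s x != set0.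
Proof.
move=> Hx; case: (classic (exists j, j < n /\ exists y, [/\ primeT n y, sub x y & y (lamn j)])).
  move=> [j [Hj Hy]]; apply/set0Pn; exists (Ordinal (ltn_trans Hj (ltnSn n))).
  by apply/in_s; rewrite /named /= Hj.
move=> Hno; apply/set0Pn; exists ord_max; apply/in_s; rewrite /named /= ltnn.
exists x; split=> // z Hz Hxz j Hj Hzj; apply: Hno; exists j; split=> //.
by exists z.
Qed.

Lemma s_single x (i : 'I_n.+1) : primeT n x -> i \in s x ->
  exists y, [/\ primeT n y, sub x y & s y = [set i]].
Proof.
move=> Hx /in_s; rewrite /named; case: ifP => Hi [y [Hy Hxy Hy3]]; exists y; split=> //.
- apply/setP => j; rewrite in_set1; apply/idP/idP.
  + move/in_s; rewrite /named; case: ifP => Hj [z [Hz Hyz Hz3]].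
      by apply/eqP/val_inj; apply: (lam_excl Hz Hz3 (Hyz _ Hy3)).
    exfalso; exact: (Hz3 z Hz (fun g h => h) i Hi (Hyz _ Hy3)).
  + move/eqP => ->; apply/in_s; rewrite /named Hi; exists y; split=> //.
- apply/setP => j; rewrite in_set1; apply/idP/idP.
  + move/in_s; rewrite /named; case: ifP => Hj [z [Hz Hyz Hz3]].
      by exfalso; exact: (Hy3 z Hz Hyz j Hj Hz3).
    by rewrite (not_ltn_max (negbT Hj)) (not_ltn_max (negbT Hi)).
  + move/eqP => ->; apply/in_s; rewrite /named Hi; exists y; split=> //.
Qed.

Lemma s_kp x y z : primeT n x -> primeT n y -> primeT n z -> sub x y -> sub x z ->
  exists u, [/\ primeT n u, sub x u, sub u y, sub u z & s u = s y :|: s z].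
Proof.
move=> Hx Hy Hz Hxy Hxz.
have [u [Hu Hxu Huy Huz Hw]] := kp_canon Hx Hy Hz Hxy Hxz.
exists u; split=> //; apply/eqP; rewrite eqEsubset; apply/andP; split; last first.
  by rewrite subUset !s_anti.
apply/subsetP => i /in_s; rewrite /named; case: ifP => Hi [w [Hw1 Huw Hw3]].
  have [v [Hv Hwv [Hyv|Hzv]]] := Hw w Hw1 Huw; apply/setUP; [left|right];
    by apply/in_s; rewrite /named Hi; exists v; split=> //; apply: Hwv.
have [v [Hv Hwv [Hyv|Hzv]]] := Hw w Hw1 Huw; apply/setUP; [left|right];
  apply/in_s; rewrite /named Hi; exists v; split=> // z' Hz' Hvz;
  apply: Hw3 => //; exact: sub_trans Hwv Hvz.
Qed.

Lemma Ch_head x y k : primeT n x -> sub x y -> Ch n y k -> Ch n x k.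
Proof.
move=> Hx Hxy [c [Hc0 Hp Hs]].
exists (fun i => if i is j.+1 then c j.+1 else x); split=> //.
- by case=> [|i] Hi //; apply: Hp.
- case=> [|i] Hi; last exact: Hs.
  have [H1 [g [H2 H3]]] := Hs 0 Hi.
  split; first by move=> g' /Hxy; rewrite -Hc0 => /H1.
  by exists g; split=> // /Hxy; rewrite -Hc0.
Qed.

Lemma Ch_cons x y k : primeT n x -> sub x y -> (exists g, y g /\ ~ x g) -> Ch n y k ->
  Ch n x k.+1.
Proof.
move=> Hx Hxy Hst [c [Hc0 Hp Hs]].
exists (fun i => if i is j.+1 then c j else x); split=> //.
- by case=> [|i] Hi //; apply: Hp.
- case=> [|i] Hi; last exact: Hs.
  by rewrite /= Hc0.
Qed.

Lemma Ch_trunc x k m : k <= m -> Ch n x m -> Ch n x k.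
Proof.
move=> Hkm [c [Hc0 Hp Hs]]; exists c; split=> // i Hi.
  by apply: Hp; apply: leq_trans Hkm.
by apply: Hs; apply: leq_trans Hkm.
Qed.

Lemma Ch_bound x m : Ch n x m -> m <= n.
Proof.
move=> H; rewrite leqNgt; apply/negP => Hm.
by apply: (@bd_nochain n x); apply: Ch_trunc H.
Qed.

Lemma realize k : forall (S : {set 'I_n.+1}) x, #|S| = k.+1 -> primeT n x -> S \subset s x ->
  exists u, [/\ primeT n u, sub x u, s u = S & Ch n u k.+1].
Proof.
elim: k => [|k IH] S x HS Hx HSx.
  have [i Hi] := cards1P (introT eqP HS); subst S.
  have [y [Hy Hxy Hsy]] := s_single Hx (subsetP HSx i (set11 i)).
  exists y; split=> //; exists (fun _ => y); split=> // i0 //.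
have [i Hi] : exists i, i \in S by apply/set0Pn; rewrite -card_gt0 HS.
have HS1 : #|S :\ i| = k.+1 by move: HS; rewrite (cardsD1 i S) Hi; case.
have [y [Hy Hxy Hsy HCy]] := IH (S :\ i) x HS1 Hx (subset_trans (subD1set S i) HSx).
have [z [Hz Hxz Hsz]] := s_single Hx (subsetP HSx i Hi).
have [u [Hu Hxu Huy Huz Hsu]] := s_kp Hx Hy Hz Hxy Hxz.
have HsuS : s u = S by rewrite Hsu Hsy Hsz setUC setD1K.
exists u; split=> //; apply: (Ch_cons (y := y)) => //.
apply: NNPP => Hno; suff : s u = s y by rewrite HsuS Hsy => /setP /(_ i); rewrite !inE Hi eqxx.
apply: s_eq => // g Hg; apply: NNPP => Hg'; apply: Hno; by exists g.
Qed.

Lemma Ch_supp x : primeT n x -> Ch n x #|s x|.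
Proof.
move=> Hx; have := s_nonempty Hx; rewrite -card_gt0.
case E: #|s x| => [|k] // _.
have [u [Hu Hxu _ HC]] := realize E Hx (subxx _).
exact: Ch_head HC.
Qed.

End Supp.

Section Model.
Variable n : nat.
Variable ps : seq nat.
Hypothesis Hsize : size ps = n.
Hypothesis Huniq : uniq ps.
Variable T1 : form -> Prop.
Hypothesis HT1 : primeT n T1.
Hypothesis Hnamed : forall i, i < n -> exists y, [/\ primeT n y, sub T1 y & y (lamn ps i)].

Notation s := (s n ps).

Lemma T1_in (i : 'I_n.+1) : i < n -> i \in s T1.
Proof. by move=> Hi; apply/in_s; rewrite /named Hi; apply: Hnamed. Qed.

Lemma max_notin_T1 : ord_max \notin s T1.
Proof.
apply/negP => Hm.
have Hall : s T1 = setT.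
  apply/setP => i; rewrite in_setT; case: (boolP (i < n)) => Hi; first exact: T1_in.
  by rewrite (not_ltn_max Hi).
have := Ch_bound (Ch_supp Hsize Huniq HT1); rewrite Hall cardsT card_ord.
by rewrite ltnn.
Qed.

Lemma sT1 : s T1 = [set~ ord_max].
Proof.
apply/setP => i; rewrite in_setC1; case: (boolP (i < n)) => Hi.
  rewrite T1_in //; apply/esym/negP => /eqP Hm; move: Hi; rewrite Hm /=; lia.
by rewrite (not_ltn_max Hi) eqxx (negbTE max_notin_T1).
Qed.

Lemma max_notin x : sub T1 x -> ord_max \notin s x.
Proof.
move=> Hx; apply/negP => H; move/negP: max_notin_T1; apply.
by apply: (subsetP (s_anti n ps Hx)).
Qed.

Lemma lemG m : forall x, primeT n x -> sub T1 x -> #|s T1 :\: s x| = m ->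
  forall k, Ch n x k -> Ch n T1 (k + m).
Proof.
elim: m => [|m IH] x Hx H1x Hm k Hk.
  by rewrite addn0; apply: Ch_head Hk.
have [j Hj] : exists j, j \in s T1 :\: s x by apply/set0Pn; rewrite -card_gt0 Hm.
have [z [Hz Hxz Hsz]] := s_single Hsize Huniq HT1 (subsetP (subsetDl _ _) j Hj).
have [u [Hu H1u Hux Huz Hsu]] := s_kp ps HT1 Hx Hz H1x Hxz.
have Hstr : exists g, x g /\ ~ u g.
  apply: NNPP => Hno; have Heq : s u = s x.
    by apply: s_eq => // g Hg; apply: NNPP => Hg'; apply: Hno; exists g.
  move: Hj; rewrite inE -Heq Hsu Hsz !inE eqxx orbT.
  by [].
have := IH u Hu H1u _ k.+1 (Ch_cons Hu Hux Hstr Hk).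
rewrite addSnnS; apply.
have -> : s T1 :\: s u = (s T1 :\: s x) :\ j.
  rewrite Hsu Hsz; apply/setP => i; rewrite !inE.
  by case: (i == j); rewrite ?orbT ?orbF.
by move: Hm; rewrite (cardsD1 j) Hj add1n => -[].
Qed.

Lemma rigid x x' : primeT n x -> primeT n x' -> sub T1 x -> sub T1 x' ->
  s x' \subset s x -> sub x x'.
Proof.
move=> Hx Hx' H1x H1x' Hss.
have [u [Hu H1u Hux Hux' Hsu]] := s_kp ps HT1 Hx Hx' H1x H1x'.
have Hsu' : s u = s x by rewrite Hsu; apply/setUidPl.
case: (classic (sub x u)) => [Hxu|Hnxu]; first exact: sub_trans Hxu Hux'.
have Hstr : exists g, x g /\ ~ u g.
  apply: NNPP => Hno; apply: Hnxu => g Hg; apply: NNPP => Hg'; apply: Hno; by exists g.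
have HC := lemG Hu H1u erefl (Ch_cons Hu Hux Hstr (Ch_supp Hsize Huniq Hx)).
have := Ch_bound HC.
have Hsub : s x \subset [set~ ord_max].
  by apply/subsetP => i Hi; rewrite !inE; apply/eqP => Hm; move/negP: (max_notin H1x); rewrite -Hm.
have := cardsID (s x) [set~ ord_max]; rewrite (setIidPr Hsub) cardsC1 card_ord /=.
rewrite sT1 Hsu'; lia.
Qed.

End Model.

Section Emb.
Variable n : nat.
Definition wid (i : 'I_n) : 'I_n.+1 := widen_ord (leqnSn n) i.
Definition emb (w : {set 'I_n}) : {set 'I_n.+1} := [set wid i | i in w].
Definition proj (S : {set 'I_n.+1}) : {set 'I_n} := [set i | wid i \in S].

Lemma wid_inj : injective wid.
Proof. by move=> i j /(congr1 val) /= /val_inj. Qed.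

Lemma emb_sub (v w : {set 'I_n}) : v \subset w -> emb v \subset emb w.
Proof. exact: imsetS. Qed.

Lemma emb_card (w : {set 'I_n}) : #|emb w| = #|w|.
Proof. by rewrite card_imset //; apply: wid_inj. Qed.

Lemma emb_noMax (w : {set 'I_n}) : ord_max \notin emb w.
Proof.
apply/imsetP => -[i _ /(congr1 val) /=] Hi.
by have := ltn_ord i; rewrite -Hi ltnn.
Qed.

Lemma notmax_wid (j : 'I_n.+1) : j != ord_max -> exists i, j = wid i.
Proof.
move=> Hj; have Hjn : j < n.
  have := ltn_ord j; rewrite ltnS leq_eqVlt => /orP [/eqP Hn|//].
  by move: Hj; rewrite -(inj_eq val_inj) /= Hn eqxx.
by exists (Ordinal Hjn); apply: val_inj.
Qed.

Lemma emb_proj (S : {set 'I_n.+1}) : ord_max \notin S -> emb (proj S) = S.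
Proof.
move=> HS; apply/setP => j; apply/imsetP/idP.
  by move=> [i]; rewrite inE => Hi ->.
move=> Hj; have [|i Hi] := notmax_wid (j := j).
  by apply/eqP => Hm; move: HS; rewrite -Hm Hj.
by exists i; rewrite // inE -Hi.
Qed.

Lemma proj_sub (S : {set 'I_n.+1}) (w : {set 'I_n}) : S \subset emb w -> proj S \subset w.
Proof.
move=> H; apply/subsetP => i; rewrite inE => /(subsetP H) /imsetP [i' Hi' /wid_inj ->].
done.
Qed.

Lemma proj_n0 (S : {set 'I_n.+1}) : S != set0 -> ord_max \notin S -> proj S != set0.
Proof.
move=> /set0Pn [j Hj] HS; apply/set0Pn.
have [|i Hi] := notmax_wid (j := j).
  by apply/eqP => Hm; move: HS; rewrite -Hm Hj.
by exists i; rewrite inE -Hi.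
Qed.

Lemma emb_subC (w : {set 'I_n}) : emb w \subset [set~ ord_max].
Proof.
apply/subsetP => j Hj; rewrite in_setC1; apply/eqP => Hm; move: Hj; rewrite Hm.
by move/negP: (emb_noMax w).
Qed.
End Emb.

Section Final.
Variable n : nat.
Variable ps : seq nat.
Hypothesis Hsize : size ps = n.
Hypothesis Huniq : uniq ps.
Variable T1 : form -> Prop.
Hypothesis HT1 : primeT n T1.
Hypothesis Hnamed : forall i, i < n -> exists y, [/\ primeT n y, sub T1 y & y (lamn ps i)].

Notation s := (s n ps).

Definition P (w : {set 'I_n}) (f : form) :=
  forall T, primeT n T -> sub T1 T -> s T \subset emb w -> T f.

Definition Vm (p : nat) (w : {set 'I_n}) := P w (Var p).

Lemma Vm_pers : persistent Vm.
Proof.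
move=> p w v _ _ Hvw H T HT H1 Hs; apply: H => //.
exact: subset_trans Hs (emb_sub Hvw).
Qed.

Let rig := rigid Hsize Huniq HT1 Hnamed.
Let mx := max_notin Hsize Huniq HT1 Hnamed.

Lemma Tw w : w != set0 -> exists T, [/\ primeT n T, sub T1 T & s T = emb w].
Proof.
move=> Hw; have Hc : #|emb w| = (#|w|.-1).+1.
  by rewrite emb_card prednK // card_gt0.
have Hsub : emb w \subset s T1 by rewrite (sT1 Hsize Huniq HT1 Hnamed); apply: emb_subC.
have [u [Hu H1u Hsu _]] := realize Hsize Huniq Hc HT1 Hsub.
by exists u; split.
Qed.

Lemma truth f : forall w, w != set0 -> (sat Vm w f <-> P w f).
Proof.
elim: f => [p|| a IHa b IHb | a IHa b IHb | a IHa b IHb] w Hw /=.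
- by [].
- split=> // HP; have [T [HT H1T HsT]] := Tw Hw.
  by case: (HT) => _ Hb _; apply: Hb; apply: HP => //; rewrite HsT.
- rewrite IHa // IHb //; split.
    move=> [Ha Hb] T HT H1T HsT.
    apply: (primeT_PF2 HT _ (Ha T HT H1T HsT) (Hb T HT H1T HsT)).
    by apply: PF_andI; [exact: PF_hyp0 | apply: PFhyp; right; left].
  move=> H; split=> T HT H1T HsT.
    exact: primeT_PF1 HT (PF_andL (PF_hyp0 _ _ _)) (H T HT H1T HsT).
  exact: primeT_PF1 HT (PF_andR (PF_hyp0 _ _ _)) (H T HT H1T HsT).
- rewrite IHa // IHb //; split.
    move=> [Ha|Hb] T HT H1T HsT.
      exact: primeT_PF1 HT (PF_orL _ (PF_hyp0 _ _ _)) (Ha T HT H1T HsT).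
    exact: primeT_PF1 HT (PF_orR _ (PF_hyp0 _ _ _)) (Hb T HT H1T HsT).
  move=> H; have [T [HT H1T HsT]] := Tw Hw.
  have := H T HT H1T; rewrite HsT => /(_ (subxx _)).
  case: (HT) => _ _ Hp /Hp [] HTab; [left|right] => T' HT' H1T' HsT';
    apply: (rig HT HT' H1T H1T' _ HTab); by rewrite HsT.
- split.
  + move=> Hs T HT H1T HsT; apply: NNPP => Hn.
    have [T' [HT' HTT' HT'a HT'b]] := ext_imp HT Hn.
    have H1T' : sub T1 T' := sub_trans H1T HTT'.
    have HsT' : s T' \subset s T := s_anti n ps HTT'.
    pose u := proj (s T').
    have Hu : u != set0 by apply: proj_n0; [exact: s_nonempty|exact: mx].
    have Hembu : emb u = s T' by apply: emb_proj; apply: mx.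
    have Huw : u \subset w by apply: proj_sub; apply: subset_trans HsT' HsT.
    have Hsa : sat Vm u a.
      apply/IHa => // T'' HT'' H1T'' HsT''; apply: (rig HT' HT'' H1T' H1T'') => //.
      by rewrite -Hembu.
    have := Hs u Hu Huw Hsa; move/IHb => /(_ Hu) /(_ T' HT' H1T').
    by rewrite Hembu => /(_ (subxx _)).
  + move=> HP v Hv Hvw Hsa; have Ha := (IHa v Hv).1 Hsa.
    apply/(IHb v Hv) => T HT H1T HsT.
    apply: primeT_mp HT (HP T HT H1T _) (Ha T HT H1T HsT).
    exact: subset_trans HsT (emb_sub Hvw).
Qed.

End Final.

Lemma inl_map (f : nat -> form) (l : seq nat) x : x \in l -> inl (f x) (map f l).
Proof.
elim: l => [|a l IH] //; rewrite inE => /orP [/eqP ->|H] /=; first by left.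
by right; apply: IH.
Qed.

Lemma vars_bigAnd x gs : (forall g, inl g gs -> x \notin vars g) -> x \notin vars (bigAnd gs).
Proof.
elim: gs => [|g gs IH] H //=.
rewrite mem_cat negb_or H /=; last by left.
by apply: IH => g' Hg'; apply: H; right.
Qed.

Theorem mainTheorem7 (n : nat) (Gamma : form -> Prop) (alpha : form) :
  1 <= n ->
  (exists ps : seq nat, [/\ size ps = n, uniq ps &
     forall x, x \in ps ->
       x \notin vars alpha /\ (forall g, Gamma g -> x \notin vars g)]) ->
  ~ derives n Gamma alpha -> ~ sem_cons n Gamma alpha.
Proof.
move=> Hn [ps [Hsize Huniq Hfresh]] Hnd Hsem.
pose Theta := fun t => t = alpha \/ exists i, i < n /\ t = Neg (lamn ps i).
have [|T1 [HT1 HG HTh]] := @lindenbaum n Gamma Theta.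
  move=> ts Hts [gs [Hgs Hpf]]; apply: Hnd; exists gs; split=> //.
  have HB : PF n gs (Or alpha (bigOr [seq Neg (lam ps x) | x <- ps])).
    apply: (@PF_cut n [:: bigOr ts]); first by move=> g [<-|[]].
    elim: ts {Hpf} Hts => [|t ts IH] Hts /=; first exact/PF_bot/PF_hyp0.
    apply: (PF_orE (a := t) (b := bigOr ts)); last exact: PF_hyp0.
    - apply: PF_imp; case: (Hts t (or_introl erefl)) => [->|[i [Hi ->]]].
        exact/PF_orL/PF_hyp0.
      apply/PF_orR/PF_bigOr_mem; rewrite /lamn.
      by apply: (inl_map (fun x => Neg (lam ps x))); rewrite mem_nth // Hsize.
    - by apply: PF_imp; apply: IH => g Hg; apply: Hts; right.
  apply: (ed (ps := ps)) => //; last exact: PF_toML.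
  move=> x Hx; have [H1 H2] := Hfresh x Hx; split=> //.
  by apply: vars_bigAnd => g /Hgs /H2.
have Hnamed : forall i, i < n -> exists y, [/\ primeT n y, sub T1 y & y (lamn ps i)].
  move=> i Hi; have [|y [Hy H1y Hya Hyb]] := ext_imp HT1 (a := lamn ps i) (b := Bot).
    by apply: HTh; right; exists i.
  by exists y.
have HsetT : [set: 'I_n] != set0 by rewrite -card_gt0 cardsT card_ord.
have Htr := truth Hsize Huniq HT1 Hnamed.
have Hsat : sat (Vm ps T1) [set: 'I_n] alpha.
  apply: Hsem; first exact: (@Vm_pers n ps T1).
  move=> g Hg; apply/(Htr g _ HsetT) => T HT H1T _; apply: H1T; exact: HG.
have := (Htr alpha _ HsetT).1 Hsat.
move=> /(_ T1 HT1 (fun g h => h)) Ha.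
apply: (HTh alpha (or_introl erefl)); apply: Ha.
apply/subsetP => j Hj; have [|i ->] := notmax_wid (j := j).
  by apply/eqP => Hm; move: Hj; rewrite Hm; apply/negP; apply: (max_notin Hsize Huniq HT1 Hnamed).
by apply: imset_f; rewrite in_setT.
Qed.
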